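(* Let $\mathcal{H}$ be a real Hilbert space, $\lambda>0$, and $F:\mathcal{H}\to\mathbb{R}\cup\{+\infty\}$ convex, proper and lower semicontinuous with $\arg\min F\neq\emptyset$, and let $F_\lambda$ be its Moreau envelope. Then: (1) if $F$ satisfies the nonsmooth Polyak–Łojasiewicz condition (ns-PL) with parameter $\mu>0$, then $F_\lambda$ satisfies the Polyak–Łojasiewicz condition (PL) with parameter $\frac{\mu}{\lambda\mu+1}$; (2) if $F_\lambda$ satisfies (PL) with parameter $\mu>0$, then $F$ satisfies (ns-PL) with parameter $\frac{\mu}{4}$.
   Context: Moreau envelope: $F_\lambda(x)=\min_{y\in\mathcal{H}}\{F(y)+\frac{1}{2\lambda}\|y-x\|^2\}$; proximal operator $\mathrm{prox}_{\lambda F}(x)=\arg\min_{y}\{F(y)+\frac{1}{2\lambda}\|y-x\|^2\}$. $F_\lambda$ is convex, differentiable with $\frac1\lambda$-Lipschitz gradient, $\min F_\lambda=\min F=:F_*$ and $\arg\min F_\lambda=\arg\min F$. (PL) with parameter $\mu$ for a differentiable $G$ with $\arg\min G\ne\emptyset$: $G(x)-\min G\le\frac1{2\mu}\|\nabla G(x)\|^2$ for all $x$. (ns-PL) with parameter $\mu$: $F(x)-F_*\le \frac{1}{2\mu}\,\mathrm{dist}(0,\partial F(x))^2$ for all $x\in\mathcal{H}$, where $\partial F$ is the convex subdifferential and $\mathrm{dist}(0,\emptyset)=+\infty$. *)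

(* Defs.v *)
From HB Require Import structures.
From mathcomp Require Import all_boot all_order all_algebra.
From mathcomp Require Import all_classical all_reals all_analysis.
Set Implicit Arguments. Unset Strict Implicit. Unset Printing Implicit Defensive.
Import Order.TTheory GRing.Theory Num.Theory.
Import numFieldNormedType.Exports.
Local Open Scope classical_set_scope.
Local Open Scope ring_scope.

(* A real Hilbert space is modelled as a complete normed module H over the
   reals R together with an inner product ip inducing its norm. *)
Record is_inner_product (R : realType) (H : completeNormedModType R)
    (ip : H -> H -> R) : Prop := {
  ip_sym : forall x y, ip x y = ip y x;
  ip_linear : forall (a : R) (x y z : H), ip (a *: x + y) z = a * ip x z + ip y z;
  ip_norm : forall x, ip x x = `|x| ^+ 2
}.

Local Open Scope ereal_scope.

Definition proper_fun (R : realType) (H : completeNormedModType R)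
    (F : H -> \bar R) : Prop :=
  (forall x, -oo < F x) /\ (exists x, F x < +oo).

Definition convex_efun (R : realType) (H : completeNormedModType R)
    (F : H -> \bar R) : Prop :=
  forall (x y : H) (t : R), (0 <= t <= 1)%R ->
    F (t *: x + (1 - t) *: y)%R <= t%:E * F x + (1 - t)%:E * F y.

Definition has_minimizer (R : realType) (H : completeNormedModType R)
    (F : H -> \bar R) : Prop :=
  exists xs : H, forall y, F xs <= F y.

Definition einf_fun (R : realType) (H : completeNormedModType R)
    (F : H -> \bar R) : \bar R := ereal_inf (range F).

(* Moreau envelope F_lambda(x) = min_y { F y + 1/(2 lambda) |y - x|^2 }
   (real valued for proper lsc convex F) *)
Definition moreau (R : realType) (H : completeNormedModType R)
    (F : H -> \bar R) (lambda : R) (x : H) : R :=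
  fine (ereal_inf [set F y + ((2 * lambda)^-1 * `|(y - x)%R| ^+ 2)%:E | y in [set: H]]).

(* convex subdifferential; empty outside dom F *)
Definition subdiff (R : realType) (H : completeNormedModType R)
    (ip : H -> H -> R) (F : H -> \bar R) (x : H) : set H :=
  [set g | F x < +oo /\ forall y, F x + (ip g (y - x)%R)%:E <= F y].

(* dist(0, A) with dist(0, emptyset) = +oo *)
Definition dist0 (R : realType) (H : completeNormedModType R) (A : set H) : \bar R :=
  ereal_inf [set (`|g|)%:E | g in A].

Definition ns_PL (R : realType) (H : completeNormedModType R)
    (ip : H -> H -> R) (F : H -> \bar R) (mu : R) : Prop :=
  forall x, F x - einf_fun F <=
    ((2 * mu)^-1)%:E * (dist0 (subdiff ip F x) * dist0 (subdiff ip F x)).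

Local Close Scope ereal_scope.

Definition is_gradient (R : realType) (H : completeNormedModType R)
    (ip : H -> H -> R) (G : H -> R^o) (x g : H) : Prop :=
  differentiable G x /\ forall h, 'd G x h = ip g h.

Definition PL (R : realType) (H : completeNormedModType R)
    (ip : H -> H -> R) (G : H -> R^o) (mu : R) : Prop :=
  (forall x, exists g, is_gradient ip G x g) /\
  exists xs : H, (forall y, G xs <= G y) /\
    forall x g, is_gradient ip G x g -> G x - G xs <= (2 * mu)^-1 * `|g| ^+ 2.

(* Main.v *)
Require Import Defs.
From HB Require Import structures.
From mathcomp Require Import all_boot all_order all_algebra.
From mathcomp Require Import all_classical all_reals all_analysis.
From mathcomp Require Import ring lra.
Import Order.TTheory GRing.Theory Num.Theory.
Import numFieldNormedType.Exports.
Set Implicit Arguments. Unset Strict Implicit.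
Local Open Scope classical_set_scope.
Local Open Scope ring_scope.

Section Alg.
Variables (R : realType) (H : completeNormedModType R) (ip : H -> H -> R).
Hypothesis hip : is_inner_product ip.

Lemma ip0l y : ip 0 y = 0.
Proof. have := ip_linear hip 1 0 0 y; rewrite scale1r addr0 mul1r; lra. Qed.
Lemma ipDl x y z : ip (x + y) z = ip x z + ip y z.
Proof. by have := ip_linear hip 1 x y z; rewrite scale1r mul1r. Qed.
Lemma ipZl a x z : ip (a *: x) z = a * ip x z.
Proof. by have := ip_linear hip a x 0 z; rewrite addr0 ip0l addr0. Qed.
Lemma ipNl x z : ip (- x) z = - ip x z.
Proof. by rewrite -scaleN1r ipZl mulN1r. Qed.
Lemma ipBl x y z : ip (x - y) z = ip x z - ip y z.
Proof. by rewrite ipDl ipNl. Qed.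
Lemma ipDr x y z : ip z (x + y) = ip z x + ip z y.
Proof. by rewrite !(ip_sym hip z) ipDl. Qed.
Lemma ipZr a x z : ip z (a *: x) = a * ip z x.
Proof. by rewrite !(ip_sym hip z) ipZl. Qed.
Lemma ipNr x z : ip z (- x) = - ip z x.
Proof. by rewrite !(ip_sym hip z) ipNl. Qed.
Lemma ipBr x y z : ip z (x - y) = ip z x - ip z y.
Proof. by rewrite ipDr ipNr. Qed.
Lemma nrm2D x y : `|x + y| ^+ 2 = `|x| ^+ 2 + 2 * ip x y + `|y| ^+ 2.
Proof. rewrite -!(ip_norm hip) ipDl !ipDr (ip_sym hip y x); lra. Qed.
Lemma nrm2B x y : `|x - y| ^+ 2 = `|x| ^+ 2 - 2 * ip x y + `|y| ^+ 2.
Proof. rewrite -!(ip_norm hip) ipBl !ipBr (ip_sym hip y x); lra. Qed.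
Lemma nrm2Z (a : R) (x : H) : `|a *: x| ^+ 2 = a ^+ 2 * `|x| ^+ 2.
Proof. by rewrite normrZ exprMn real_normK // num_real. Qed.

Definition ipf (g : H) : H -> R^o := fun h => ip g h.
Lemma ipf_linear g : linear (ipf g).
Proof. by move=> a u v; rewrite /ipf ipDr ipZr. Qed.
HB.instance Definition _ g := GRing.isLinear.Build R H R^o *:%R (ipf g) (ipf_linear g).

Lemma ipf_cont g : continuous (ipf g).
Proof.
apply: bounded_linear_continuous; apply/bounded_funP => r.
exists ((`|g| ^+ 2 + r ^+ 2) / 2) => h hr.
have h1 := nrm2D g h; have h2 := nrm2B g h.
have := normr_ge0 (g + h); have := normr_ge0 (g - h); have := normr_ge0 h.
move=> a b c; change (`|ip g h| <= (`|g| ^+ 2 + r ^+ 2) / 2); rewrite ler_norml; apply/andP; split; nra.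
Qed.

Lemma diff_quad (G : H -> R^o) x g c : 0 <= c ->
  (forall h, `|G (h + x) - G x - ip g h| <= c * `|h| ^+ 2) ->
  is_gradient ip G x g.
Proof.
move=> c0 hG.
have eqo : G \o shift x = cst (G x) + ipf g +o_ 0 id.
  apply/eqaddoP => eps eps0.
  have e0 : 0 < eps / (c + 1) by rewrite divr_gt0 // ltr_wpDl.
  near=> h.
  have hs : `|h| < eps / (c + 1) by near: h; exact: nbhs0_lt.
  rewrite /= opprD addrA; apply: (le_trans (hG h)).
  have hn := normr_ge0 h.
  rewrite ltr_pdivlMr ?ltr_wpDl // in hs.
  rewrite expr2 mulrA ler_wpM2r //; nra.
have dG : 'd G x = ipf g :> (H -> R^o).
  exact: diff_unique (@ipf_cont g) eqo.
split; last by move=> h; rewrite dG.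
by apply/diff_locallyP; rewrite dG; split => //; exact: ipf_cont.
Unshelve. all: by end_near. Qed.

Lemma grad_unique (G : H -> R^o) x g1 g2 :
  is_gradient ip G x g1 -> is_gradient ip G x g2 -> g1 = g2.
Proof.
move=> [_ h1] [_ h2].
have : ip (g1 - g2) (g1 - g2) = 0.
  by rewrite ipBl -h1 -h2 subrr.
rewrite (ip_norm hip) => /eqP; rewrite expf_eq0 /= normr_eq0 subr_eq0 => /eqP //.
Qed.
End Alg.

Section Mor.
Variables (R : realType) (H : completeNormedModType R) (ip : H -> H -> R).
Hypothesis hip : is_inner_product ip.
Variables (F : H -> \bar R) (lambda : R).
Hypothesis hl : 0 < lambda.
Hypothesis hprop : proper_fun F.
Variable xs : H.
Hypothesis hxs : forall y, (F xs <= F y)%E.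

Let c := (2 * lambda)^-1.
Let c0 : 0 < c. Proof. by rewrite /c invr_gt0 mulr_gt0. Qed.
Definition Phi x y := (F y + (c * `|y - x| ^+ 2)%:E)%E.
Definition Fstar := fine (F xs).

Lemma Fxs_fin : F xs = Fstar%:E.
Proof.
rewrite /Fstar fineK // fin_numE; apply/andP; split.
  by rewrite gt_eqF // hprop.1.
have [x0 hx0] := hprop.2; by rewrite lt_eqF // (le_lt_trans (hxs x0)).
Qed.

Lemma F_nNy y : F y != -oo%E.
Proof. by rewrite gt_eqF // hprop.1. Qed.

Lemma Phi_ge x y : (Fstar%:E <= Phi x y)%E.
Proof.
rewrite /Phi -Fxs_fin; apply: lee_paddr; last exact: hxs.
by rewrite lee_fin mulr_ge0 // ?ltW // exprn_ge0.
Qed.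

Lemma moreauE x :
  (moreau F lambda x)%:E = ereal_inf [set Phi x y | y in [set: H]].
Proof.
have lb : (Fstar%:E <= ereal_inf [set Phi x y | y in [set: H]])%E.
  by apply: le_ereal_inf_tmp => _ [y _ <-]; exact: Phi_ge.
rewrite /moreau fineK // fin_numE; apply/andP; split.
  by rewrite gt_eqF // (lt_le_trans (ltNyr _) lb).
have ub : (ereal_inf [set Phi x y | y in [set: H]] <= Phi x xs)%E.
  by apply: ereal_inf_lbound; exists xs.
rewrite lt_eqF // (le_lt_trans ub) //.
by rewrite /Phi Fxs_fin -EFinD ltry.
Qed.

Lemma moreau_le x y : ((moreau F lambda x)%:E <= Phi x y)%E.
Proof. by rewrite moreauE; apply: ereal_inf_lbound; exists y. Qed.

Lemma moreau_le_fin x y fy : F y = fy%:E ->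
  moreau F lambda x <= fy + c * `|y - x| ^+ 2.
Proof. by move=> hy; have := moreau_le x y; rewrite /Phi hy -EFinD lee_fin. Qed.

Lemma moreau_ge x r : (forall y, (r%:E <= Phi x y)%E) -> r <= moreau F lambda x.
Proof.
move=> hr; rewrite -lee_fin moreauE; apply: le_ereal_inf_tmp.
by move=> _ [y _ <-]; exact: hr.
Qed.

Lemma moreau_ge_Fstar x : Fstar <= moreau F lambda x.
Proof. by apply: moreau_ge => y; exact: Phi_ge. Qed.

Lemma moreau_xs : moreau F lambda xs <= Fstar.
Proof. by have := @moreau_le_fin xs xs _ Fxs_fin; rewrite subrr normr0 expr0n mulr0 addr0. Qed.

Definition issub p fp g := F p = fp%:E /\
  forall z, (F p + (ip g (z - p))%:E <= F z)%E.

Lemma sub_lb p fp g : issub p fp g ->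
  forall y, fp + ip g (y - p) - lambda / 2 * `|g| ^+ 2 <= moreau F lambda y.
Proof.
move=> [hp hsub] y; apply: moreau_ge => z; rewrite /Phi.
move: (hsub z) (F_nNy z); rewrite hp; case: (F z) => [fz| |] hz hnz; last by [].
  2: by rewrite addye // leey.
move: hz; rewrite -EFinD !lee_fin => hz.
have key : 0 <= `|z - y + lambda *: g| ^+ 2 by rewrite exprn_ge0.
rewrite (nrm2D hip) nrm2Z (ipZr hip) in key.
have e1 : ip g (z - p) = ip g (y - p) + ip (z - y) g.
  rewrite !(ipBr hip) (ip_sym hip (z - y)) (ipBr hip); lra.
have e2 : ip (z - y) g + lambda / 2 * `|g| ^+ 2 + c * `|z - y| ^+ 2 =
   c * (`|z - y| ^+ 2 + 2 * (lambda * ip (z - y) g) + lambda ^+ 2 * `|g| ^+ 2).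
  rewrite /c; field; exact: lt0r_neq0.
have : 0 <= c * (`|z - y| ^+ 2 + 2 * (lambda * ip (z - y) g) + lambda ^+ 2 * `|g| ^+ 2).
  by rewrite mulr_ge0 // ltW.
lra.
Qed.

Lemma env p fp g : issub p fp g ->
  moreau F lambda (p + lambda *: g) = fp + lambda / 2 * `|g| ^+ 2 /\
  is_gradient ip (moreau F lambda) (p + lambda *: g) g.
Proof.
move=> hs; set x := p + lambda *: g.
have up y : moreau F lambda y <= fp + c * `|p - y| ^+ 2 := moreau_le_fin y hs.1.
have lo := sub_lb hs.
have e1 : c * (lambda ^+ 2 * `|g| ^+ 2) = lambda / 2 * `|g| ^+ 2.
  rewrite /c; field; exact: lt0r_neq0.
have hM : moreau F lambda x = fp + lambda / 2 * `|g| ^+ 2.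
  apply/eqP; rewrite eq_le; apply/andP; split.
    have := up x; rewrite /x opprD addrA subrr add0r normrN nrm2Z; lra.
  have := lo x; rewrite /x [p + _]addrC addrK (ipZr hip) (ip_norm hip); lra.
split => //.
apply: (@diff_quad _ _ _ hip _ _ _ c); first exact: ltW.
move=> h.
have eh : h + x - p = h + lambda *: g by rewrite /x [p + _]addrC addrA addrK.
have u := up (h + x); rewrite -normrN opprB eh (nrm2D hip) nrm2Z (ipZr hip) in u.
have l := lo (h + x); rewrite eh (ipDr hip) (ipZr hip) (ip_norm hip) in l.
have e2 : c * (2 * (lambda * ip h g)) = ip g h.
  rewrite (ip_sym hip) /c; field; exact: lt0r_neq0.
have e3 : 0 <= c * `|h| ^+ 2 by rewrite mulr_ge0 ?exprn_ge0 // ltW.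
rewrite hM ler_norml; apply/andP; split; lra.
Qed.

Hypothesis hconv : convex_efun F.
Hypothesis hlsc : lower_semicontinuous F.

Lemma mid x a b fa fb : F a = fa%:E -> F b = fb%:E ->
  c * `|a - b| ^+ 2 <= 2 * (fa + c * `|a - x| ^+ 2 + fb + c * `|b - x| ^+ 2
                            - 2 * moreau F lambda x).
Proof.
move=> ha hb.
have h2 : (1 - 2^-1 = 2^-1 :> R) by field.
set z := 2^-1 *: a + (1 - 2^-1) *: b.
have hc := hconv a b (t := 2^-1).
rewrite ha hb -!EFinM -EFinD in hc.
have hh : (0:R) <= (2:R)^-1 <= 1 by apply/andP; split; lra.
have {}hc := hc hh.
have hz := moreau_le x z; rewrite /Phi in hz.
move: hc hz (F_nNy z); rewrite -/z; case: (F z) => [fz| |] hc hz hnz; last by [].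
  2: by move: hc; rewrite leNgt ltey.
rewrite -EFinD !lee_fin in hc hz.
have ez : z - x = 2^-1 *: (a - x) + 2^-1 *: (b - x).
  rewrite /z h2 !scalerBr addrACA -opprD -scalerDl.
  by rewrite (_ : 2^-1 + 2^-1 = 1 :> R) ?scale1r //; field.
have eab : a - b = (a - x) - (b - x) by rewrite opprB addrA subrK.
rewrite ez (nrm2D hip) !nrm2Z (ipZl hip) (ipZr hip) in hz.
rewrite eab (nrm2B hip).
rewrite h2 in hc.
have e1 : (2^-1 : R) ^+ 2 = 4^-1 by field.
rewrite e1 in hz.
set A := `|a - x| ^+ 2 in hz *; set B := `|b - x| ^+ 2 in hz *.
set I := ip (a - x) (b - x) in hz *.
have : c * (4^-1 * A + 2 * (2^-1 * (2^-1 * I)) + 4^-1 * B) =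
  4^-1 * (c * A) + 2^-1 * (c * I) + 4^-1 * (c * B) by field.
move=> e2; rewrite e2 in hz.
have : c * (A - 2 * I + B) = c * A - 2 * (c * I) + c * B by ring.
move=> e3; rewrite e3; lra.
Qed.

Lemma aux (X Y : R) : 0 <= Y ->
  (forall t, 0 < t -> t <= 1 -> 0 <= t * X + t ^+ 2 * Y) -> 0 <= X.
Proof.
move=> Y0 h; rewrite leNgt; apply/negP => X0.
have YX : 0 < Y - X by lra.
set t := - X / (Y - X).
have t0 : 0 < t by rewrite /t divr_gt0 // oppr_gt0.
have t1 : t <= 1 by rewrite /t ler_pdivrMr // mul1r; lra.
have et : t * (Y - X) = - X by rewrite /t divfK // lt0r_neq0.
have := h t t0 t1.
have e2 : t * X + t ^+ 2 * Y = t * (t * X) by rewrite expr2; nra.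
rewrite e2 => h2.
have : t * X < 0 by rewrite pmulr_rlt0.
have : t * (t * X) < 0 by rewrite pmulr_rlt0 // pmulr_rlt0.
lra.
Qed.

Lemma near_inv (d : R) : 0 < d -> \forall n \near \oo, (n.+1%:R^-1 : R) < d.
Proof. by move=> d0; exact: (near_infty_natSinv_lt (PosNum d0)). Qed.

Lemma prox x : exists p fp, issub p fp (lambda^-1 *: (x - p)).
Proof.
set m := moreau F lambda x.
have hmE := moreauE x.
have seq (n : nat) : exists y, (Phi x y < (m + n.+1%:R^-1)%:E)%E.
  have : (ereal_inf [set Phi x y | y in [set: H]] < (m + n.+1%:R^-1)%:E)%E.
    by rewrite -hmE lte_fin ltrDl invr_gt0 ltr0n.
  by move/ereal_inf_lt => [_ [y _ <-] hy]; exists y.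
have [u hu] := choice seq.
have ufin n : exists fu, F (u n) = fu%:E /\
    fu + c * `|u n - x| ^+ 2 < m + n.+1%:R^-1.
  move: (hu n) (F_nNy (u n)); rewrite /Phi; case: (F (u n)) => [fu| |] h hn //.
    by exists fu; split => //; rewrite -EFinD lte_fin in h.
have hcau : cauchy (u @ \oo).
  apply/cauchy_ballP => e e0; near_simpl.
  have d0 : 0 < c * e ^+ 2 / 4 by rewrite divr_gt0 // mulr_gt0 // exprn_gt0.
  near=> n k => /=.
  have [fn [hn1 hn2]] := ufin n.
  have [fk [hk1 hk2]] := ufin k.
  have hm := mid x hn1 hk1.
  have in1 : n.+1%:R^-1 < c * e ^+ 2 / 4 by near: n; exact: near_inv.
  have in2 : k.+1%:R^-1 < c * e ^+ 2 / 4 by near: k; exact: near_inv.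
  rewrite -ball_normE /ball_ /=.
  rewrite -/m in hm; set a1 := (n.+1%:R^-1 : R) in hn2 in1; set a2 := (k.+1%:R^-1 : R) in hk2 in2; have : c * `|u n - u k| ^+ 2 < c * e ^+ 2 by lra.
  rewrite ltr_pM2l //; have := normr_ge0 (u n - u k); nra.
have hcv : cvg (u @ \oo) by apply/cauchy_cvgP.
set p := lim (u @ \oo).
have hPp : (Phi x p <= m%:E)%E.
  rewrite leNgt; apply/negP => hlt.
  set r := c * `|p - x| ^+ 2.
  have [e e0 he] : exists2 e, 0 < e & ((m - r + e)%:E < F p)%E.
    move: hlt; rewrite /Phi -/r; case: (F p) (F_nNy p) => [fp| |] hn h.
    - exists ((fp + r - m) / 2); rewrite -EFinD lte_fin in h; first lra.
      by rewrite lte_fin; lra.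
    - by exists 1 => //; exact: ltry.
    - by [].
  have [V hV hVF] := hlsc he.
  have hn : (fun n => `|u n - x|) @ \oo --> `|p - x|.
    by apply: cvg_norm; apply: cvgB => //; exact: cvg_cst.
  have hr : (fun n => c * `|u n - x| ^+ 2) @ \oo --> r.
    rewrite /r; apply: cvgMl_tmp.
    have -> : (fun n => `|u n - x| ^+ 2) = (fun n => `|u n - x|) \* (fun n => `|u n - x|).
      by apply: funext => n; rewrite /= expr2.
    by rewrite expr2; apply: cvgM.
  have ev1 : \forall n \near \oo, V (u n) by exact: hcv V hV.
  have ev2 := @cvgr_gt R _ _ _ _ _ hr (r - e / 2) ltac:(lra).
  have ev3 := near_inv (d := e / 2) ltac:(lra).
  near \oo => n.
  have [fn [hn1 hn2]] := ufin n.
  have h1 : V (u n) by near: n.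
  have h2 : r - e / 2 < c * `|u n - x| ^+ 2 by near: n.
  have h3 : (n.+1%:R^-1 : R) < e / 2 by near: n.
  have := hVF _ h1; rewrite hn1 lte_fin => h4.
  set a1 := (n.+1%:R^-1 : R) in hn2 h3.
  have : a1 < a1 by move: h2 h4 hn2 h3; clear -e0; lra.
  by rewrite ltxx.
have hPe : Phi x p = m%:E.
  by apply/eqP; rewrite eq_le hPp /m moreau_le.
move: hPe; rewrite /Phi; case hFp : (F p) (F_nNy p) => [fp| |] hnp // hPe.
move: hPe; rewrite -EFinD; case => hfp.
exists p, fp; split => // z.
rewrite hFp; case hFz : (F z) (F_nNy z) => [fz| |] hnz //; last by rewrite leey.
rewrite -EFinD lee_fin.
set Y := c * `|z - p| ^+ 2.
set J := ip (p - x) (z - p).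
have eg : ip (lambda^-1 *: (x - p)) (z - p) = - (2 * c * J).
  rewrite (ipZl hip) -opprB (ipNl hip) /J (_ : lambda^-1 = 2 * c); first ring.
  rewrite /c; field; exact: lt0r_neq0.
rewrite eg.
suff : 0 <= fz - fp + 2 * c * J by lra.
apply: (@aux _ Y); first by rewrite mulr_ge0 ?exprn_ge0 // ltW.
move=> t t0 t1.
set zt := t *: z + (1 - t) *: p.
have hh : 0 <= t <= 1 by apply/andP; split => //; exact: ltW.
have hc := hconv z p hh; rewrite hFp hFz -!EFinM -EFinD in hc.
have hz := moreau_le x zt; rewrite /Phi in hz.
move: hc hz (F_nNy zt); rewrite -/zt; case: (F zt) => [fzt| |] hc hz hnzt; last by [].
  2: by move: hc; rewrite leNgt ltey.
rewrite -EFinD !lee_fin in hc hz.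
have ezt : zt - x = (p - x) + t *: (z - p).
  by rewrite /zt scalerBl scale1r scalerBr addrCA addrAC.
rewrite ezt (nrm2D hip) nrm2Z (ipZr hip) -/J in hz.
rewrite -/m in hz; rewrite -hfp in hz.
rewrite /Y; lra.
Unshelve. all: by end_near.
Qed.
End Mor.

Lemma einfE (R : realType) (H : completeNormedModType R) (F : H -> \bar R) xs :
  proper_fun F -> (forall y, (F xs <= F y)%E) -> einf_fun F = (Fstar F xs)%:E.
Proof.
move=> hp hxs; rewrite -(Fxs_fin hp hxs); apply/eqP; rewrite eq_le; apply/andP; split.
  by apply: ereal_inf_lbound; exists xs.
by apply: le_ereal_inf_tmp => _ [y _ <-]; exact: hxs.
Qed.

Lemma dist0_le (R : realType) (H : completeNormedModType R) (A : set H) g :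
  A g -> (dist0 A <= (`|g|)%:E)%E.
Proof. by move=> Ag; apply: ereal_inf_lbound; exists g. Qed.

Lemma dist0_ge0 (R : realType) (H : completeNormedModType R) (A : set H) :
  (0 <= dist0 A)%E.
Proof. by apply: le_ereal_inf_tmp => _ [g _ <-]; rewrite lee_fin. Qed.

Unset Implicit Arguments. Set Strict Implicit.
Local Close Scope classical_set_scope.
Local Open Scope ring_scope.

Theorem proposition4p1 (R : realType) (H : completeNormedModType R)
    (ip : H -> H -> R) (F : H -> \bar R) (lambda : R) :
  is_inner_product ip -> 0 < lambda ->
  convex_efun F -> proper_fun F -> lower_semicontinuous F -> has_minimizer F ->
  (forall mu : R, 0 < mu -> ns_PL ip F mu ->
     PL ip (moreau F lambda) (mu / (lambda * mu + 1))) /\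
  (forall mu : R, 0 < mu -> PL ip (moreau F lambda) mu ->
     ns_PL ip F (mu / 4)).
Proof.
move=> hip hl hconv hprop hlsc [xs hxs].
have hex (x p : H) : p + lambda *: (lambda^-1 *: (x - p)) = x.
  by rewrite scalerA mulfV ?lt0r_neq0 // scale1r subrKC.
have hE := einfE hprop hxs.
split.
- move=> mu mu0 hns; split.
    move=> x; have [p [fp hs]] := prox hip hl hprop hxs hconv hlsc x.
    have [_ hg] := env hip hl hprop hxs hs.
    by rewrite hex in hg; eexists; exact: hg.
  exists xs; split.
    move=> y; apply: le_trans (moreau_xs hl hprop hxs) _.
    exact: moreau_ge_Fstar.
  move=> x g' hg'.
  have [p [fp hs]] := prox hip hl hprop hxs hconv hlsc x.
  have [hM hg] := env hip hl hprop hxs hs.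
  rewrite hex in hM hg.
  have eg := grad_unique hip hg' hg; subst g'.
  set g := lambda^-1 *: (x - p) in hM hg *.
  have hge := moreau_ge_Fstar hl hprop hxs xs.
  have := hns p; rewrite hs.1 hE.
  have d0 := dist0_ge0 (subdiff ip F p).
  have dg : (dist0 (subdiff ip F p) <= (`|g|)%:E)%E by apply: dist0_le; by split; [rewrite hs.1 ltry | exact: hs.2].
  move: d0 dg; case: (dist0 (subdiff ip F p)) => [r| |] d0 dg //.
  rewrite -!EFinM -EFinB lee_fin => hn.
  rewrite !lee_fin in d0 dg.
  have hrr : (2 * mu)^-1 * (r * r) <= (2 * mu)^-1 * `|g| ^+ 2.
    apply: ler_wpM2l; first by rewrite invr_ge0 mulr_ge0 // ltW.
    rewrite expr2; nra.
  have ek : (2 * (mu / (lambda * mu + 1)))^-1 = (2 * mu)^-1 + lambda / 2.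
    field; apply/andP; split; first exact: lt0r_neq0.
    by apply: lt0r_neq0; rewrite ltr_wpDl // mulr_ge0 // ltW.
  rewrite hM ek mulrDl; lra.
- move=> mu mu0 [_ [xs' [hmin hpl]]] x.
  rewrite hE.
  have [[g0 hg0]|hne] := pselect (exists g, subdiff ip F x g); last first.
    have -> : dist0 (subdiff ip F x) = +oo%E.
      rewrite /dist0 (_ : subdiff ip F x = set0) ?image_set0 ?ereal_inf0 //.
      by apply/seteqP; split => // g hg; apply: hne; exists g.
    rewrite mulyy muleC gt0_mulye ?leey // lte_fin invr_gt0 mulr_gt0 // divr_gt0 //.
  have hfx : exists fx, F x = fx%:E.
    move: hg0 => [hlt _]; move: hlt (F_nNy hprop x); case: (F x) => [fx| |] //.
    by exists fx.
  have [fx hFx] := hfx; rewrite hFx.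
  have hK : forall g, subdiff ip F x g -> fx - Fstar F xs <= (2 * mu)^-1 * `|g| ^+ 2.
    move=> g [_ hsub].
    have hs : issub ip F x fx g by split.
    have [hM hg] := env hip hl hprop hxs hs.
    have := hpl _ _ hg; rewrite hM => h1.
    have h2 := hmin xs; have h3 := moreau_xs hl hprop hxs.
    have h4 : 0 <= lambda / 2 * `|g| ^+ 2 by rewrite mulr_ge0 ?exprn_ge0 // divr_ge0 // ltW.
    lra.
  have K0 : 0 <= fx - Fstar F xs.
    by rewrite subr_ge0 -lee_fin -hFx -(Fxs_fin hprop hxs); exact: hxs.
  set K := fx - Fstar F xs in hK K0 *.
  set s := Num.sqrt (2 * mu * K).
  have s0 : 0 <= s := sqrtr_ge0 _.
  have ss : s ^+ 2 = 2 * mu * K by rewrite sqr_sqrtr // mulr_ge0 // mulr_ge0 // ltW.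
  have sd : (s%:E <= dist0 (subdiff ip F x))%E.
    apply: le_ereal_inf_tmp => _ [g hg <-]; rewrite lee_fin.
    have := hK g hg; have := normr_ge0 g.
    have e : (2 * mu)^-1 * `|g| ^+ 2 * (2 * mu) = `|g| ^+ 2.
      field; exact: lt0r_neq0.
    move=> gn hk.
    have : 2 * mu * K <= `|g| ^+ 2.
      rewrite -e [X in X <= _]mulrC; apply: ler_wpM2r => //.
      by rewrite mulr_ge0 // ltW.
    rewrite -ss => hh; nra.
  have dg : (dist0 (subdiff ip F x) <= (`|g0|)%:E)%E by apply: dist0_le.
  move: sd dg; case: (dist0 (subdiff ip F x)) => [r| |] sd dg //.
  rewrite -!EFinM lee_fin; rewrite lee_fin in sd.
  have e : (2 * (mu / 4))^-1 * (r * r) = 2 * (r * r) / mu by field; exact: lt0r_neq0.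
  rewrite e ler_pdivlMr //.
  have : 2 * mu * K <= r * r by rewrite -ss expr2; nra.
  have : 0 <= mu * K by rewrite mulr_ge0 // ltW.
  rewrite -/K; lra.
Qed.
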